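(* Let $\Psi\colon V\to W$ be a morphism of FI-modules and let $E\geq 0$. Assume that $W$ is centrally stable starting at $E$, that $V$ is boundedly generated in degree $E$, and that for all finite sets $J\subset\mathbb{N}$ with $|J|\leq E$ the map $\Psi_J\colon V_J\to W_J$ is an isomorphism. Then $\Psi$ is an isomorphism, i.e. $\Psi_J$ is an isomorphism for every finite $J\subset\mathbb{N}$.
   Context: $\mathrm{FI}$ is the category of finite subsets of $\mathbb{N}$ and injections. An FI-module $W$ is a functor from $\mathrm{FI}$ to abelian groups: abelian groups $W_I$ and homomorphisms $W_f\colon W_I\to W_J$ for injections $f$, functorially. For $I\subset J$ write $W_I^J=W_f$ for the inclusion $f$. A morphism $\Psi\colon V\to W$ is a natural transformation (maps $\Psi_I\colon V_I\to W_I$ commuting with all $V_f,W_f$). $W$ is boundedly generated in degree $A$ if for every finite $J$, the map $\bigoplus_{I\subset J,|I|\leq A}W_I\to W_J$ induced by the $W_I^J$ is surjective. For finite $J$, let $\eta\colon\bigoplus_{K\subset J,|K|=|J|-2}W_K\to\bigoplus_{I\subset J,|I|=|J|-1}W_I$ send $x\in W_K$ to $(W_K^{I_1}(x),-W_K^{I_2}(x))\in W_{I_1}\oplus W_{I_2}$, where $I_1,I_2$ are the two sets with $K\subset I_i\subset J$, $|I_i|=|J|-1$. The $J$-central stabilization $\widetilde{W}_J$ is the cokernel of $\eta$; the maps $W_I^J$ induce a natural map $\widetilde{W}_J\to W_J$. $W$ is centrally stable starting at $E$ if $\widetilde{W}_J\to W_J$ is an isomorphism for every finite $J$ with $|J|>E$.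 *)

(* Defs.v *)
From HB Require Import structures.
From mathcomp Require Import all_boot all_order all_algebra.
From mathcomp Require Import finmap.
Unset Printing Implicit Defensive.
Import GRing.Theory.
Local Open Scope fset_scope.
Local Open Scope ring_scope.

(* Finite subsets of N are {fset nat}.  An injection I -> J is represented by
   a function f : nat -> nat that is injective on I and maps I into J; only
   its values on I matter (see FImap_ext). *)
Definition FIinj (I J : {fset nat}) (f : nat -> nat) : Prop :=
  {in I &, injective f} /\ (forall x, x \in I -> f x \in J).

Record FImod := {
  FIobj :> {fset nat} -> zmodType;
  FImap : forall I J : {fset nat}, (nat -> nat) -> FIobj I -> FIobj J;
  FImap_add : forall I J f, FIinj I J f -> forall x y : FIobj I,
      FImap I J f (x + y) = FImap I J f x + FImap I J f y;
  FImap_ext : forall I J f g, FIinj I J f -> {in I, f =1 g} ->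
      forall x, FImap I J f x = FImap I J g x;
  FImap_id : forall I (x : FIobj I), FImap I I id x = x;
  FImap_comp : forall I J K f g, FIinj I J f -> FIinj J K g ->
      forall x, FImap I K (g \o f) x = FImap J K g (FImap I J f x)
}.

Arguments FImap : clear implicits.
Definition incl (W : FImod) (I J : {fset nat}) : W I -> W J := FImap W I J id.

Definition is_FImorph (V W : FImod) (Psi : forall I, V I -> W I) : Prop :=
  (forall I (x y : V I), Psi I (x + y) = Psi I x + Psi I y) /\
  (forall I J f, FIinj I J f -> forall x : V I,
      Psi J (FImap V I J f x) = FImap W I J f (Psi I x)).

Definition bounded_gen (W : FImod) (A : nat) : Prop :=
  forall (J : {fset nat}) (w : W J), exists x : (forall I, W I),
    w = \sum_(I <- fpowerset J | (#|` I| <= A)%N) incl W I J (x I).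

Definition codim1 (J I : {fset nat}) : bool := (I `<=` J) && (#|` I|.+1 == #|` J|)%N.
Definition codim2 (J K : {fset nat}) : bool := (K `<=` J) && (#|` K|.+2 == #|` J|)%N.

(* For K ⊂ I ⊂ J of codimensions 2,1: sign +1 if I = I_1 (the element of I\K
   is the smaller element of J\K), -1 otherwise (I = I_2). *)
Definition eta_sign (J K I : {fset nat}) : bool :=
  has (fun a => has (fun b => (a < b)%N) (enum_fset (J `\` I))) (enum_fset (I `\` K)).

Definition eta (W : FImod) (J : {fset nat}) (y : forall K, W K) (I : {fset nat}) : W I :=
  \sum_(K <- fpowerset J | codim2 J K && (K `<=` I))
     (if eta_sign J K I then incl W K I (y K) else - incl W K I (y K)).

Definition sigma (W : FImod) (J : {fset nat}) (x : forall I, W I) : W J :=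
  \sum_(I <- fpowerset J | codim1 J I) incl W I J (x I).

(* The natural map from the J-central stabilization coker(eta) to W_J is an
   isomorphism: sigma is surjective and ker sigma ⊆ im eta (im eta ⊆ ker sigma
   always holds, so the induced map on coker eta is well defined). *)
Definition central_iso (W : FImod) (J : {fset nat}) : Prop :=
  (forall w : W J, exists x : (forall I, W I), w = sigma W J x) /\
  (forall x : (forall I, W I), sigma W J x = 0 ->
     exists y : (forall K, W K), forall I, codim1 J I -> x I = eta W J y I).

Definition centrally_stable (W : FImod) (E : nat) : Prop :=
  forall J : {fset nat}, (E < #|` J|)%N -> central_iso W J.

(* Main.v *)
Require Import Defs.
From mathcomp Require Import all_boot all_order all_algebra.
From mathcomp Require Import finmap.
Local Open Scope fset_scope.
From mathcomp Require Import zify.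
Import GRing.Theory.
Local Open Scope ring_scope.

Lemma two_elems (J K : {fset nat}) : K `<=` J -> (#|` K|.+2 = #|` J|)%N ->
  exists a b, [/\ (a < b)%N, a \in J `\` K, b \in J `\` K &
     forall c, c \in J `\` K -> c = a \/ c = b].
Proof.
move=> KJ cK.
have cD : #|` J `\` K| = 2%N by rewrite cardfsDS // -cK; lia.
have : (0 < #|` J `\` K|)%N by rewrite cD.
rewrite cardfs_gt0 => /fset0Pn [x xD].
have : #|` (J `\` K) `\ x| == 1%N.
  by move: cD; rewrite (cardfsD1 x) xD add1n => -[->].
case/cardfs1P => y Ey.
have yD : y \in J `\` K by have := fsubD1set (J `\` K) x => /fsubsetP; apply; rewrite Ey fset11.
have yx : y != x.
  have : y \in (J `\` K) `\ x by rewrite Ey fset11.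
  by rewrite in_fsetD1 => /andP [].
have allc : forall c, c \in J `\` K -> c = x \/ c = y.
  move=> c cD'; case: (eqVneq c x) => [->|cx]; first by left.
  right; have : c \in (J `\` K) `\ x by rewrite in_fsetD1 cx.
  by rewrite Ey in_fset1 => /eqP.
case: (ltngtP x y) => [xy|yx'|exy]; last by move: yx; rewrite exy eqxx.
- by exists x, y; split.
- exists y, x; split => // c /allc []; by [right|left].
Qed.

Lemma codim1_sup (J K I : {fset nat}) : K `<=` J -> (#|` K|.+2 = #|` J|)%N ->
  codim1 J I -> K `<=` I -> exists c, c \in J `\` K /\ I = c |` K.
Proof.
move=> KJ cK /andP [IJ /eqP cI] KI.
have : #|` I `\` K| == 1%N by rewrite cardfsDS // -cI in cK *; apply/eqP; lia.
case/cardfs1P => c Ec.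
have cIK : c \in I `\` K by rewrite Ec fset11.
exists c; split.
  by move: cIK; rewrite !in_fsetD => /andP [-> /(fsubsetP IJ) ->].
apply/fsetP => x; rewrite in_fset1U.
case: (boolP (x \in K)) => xK; first by rewrite orbT (fsubsetP KI).
rewrite orbF; apply/idP/idP.
  move=> xI; have : x \in I `\` K by rewrite in_fsetD xK.
  by rewrite Ec in_fset1.
move/eqP => ->; by move: cIK; rewrite in_fsetD => /andP [].
Qed.

Lemma sum2 (T : eqType) (R : zmodType) (r : seq T) (P : pred T) (F : T -> R) x1 x2 :
  uniq r -> x1 != x2 -> x1 \in r -> x2 \in r -> P x1 -> P x2 ->
  (forall y, y \in r -> P y -> y = x1 \/ y = x2) ->
  \sum_(i <- r | P i) F i = F x1 + F x2.
Proof.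
move=> ur n12 x1r x2r P1 P2 Hall.
rewrite -big_filter (bigD1_seq x1) ?mem_filter ?P1 ?filter_uniq //=.
rewrite -big_filter (bigD1_seq x2) ?mem_filter ?P2 ?filter_uniq //=; last by rewrite eq_sym n12.
rewrite big1_seq ?addr0 // => i /andP [i2]; rewrite !mem_filter => /andP [i1 /andP [Pi ir]].
by case: (Hall i ir Pi) => ei; [move: i1|move: i2]; rewrite ei eqxx.
Qed.

Lemma inclI (I J : {fset nat}) : I `<=` J -> FIinj I J id.
Proof. by move=> IJ; split; [move=> x y _ _|move=> x /(fsubsetP IJ)]. Qed.

Section Maps.
Variable U : FImod.

Lemma FImap0 I J f : FIinj I J f -> FImap U I J f 0 = 0.
Proof.
move=> H; apply/eqP; rewrite -(subrr (FImap U I J f 0)).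
by rewrite -{2}(addr0 0) FImap_add // addrK.
Qed.

Lemma FImapN I J f : FIinj I J f -> forall x, FImap U I J f (- x) = - FImap U I J f x.
Proof.
move=> H x; apply/eqP; rewrite -subr_eq0 opprK -FImap_add // addNr FImap0 //.
Qed.

Lemma FImap_sum I J f (H : FIinj I J f) (T : Type) (r : seq T) (P : pred T) (F : T -> U I) :
  FImap U I J f (\sum_(i <- r | P i) F i) = \sum_(i <- r | P i) FImap U I J f (F i).
Proof. apply: (big_morph (FImap U I J f)); [exact: FImap_add H|exact: FImap0 H]. Qed.

Lemma incl_comp K I J : K `<=` I -> I `<=` J -> forall x, incl U I J (incl U K I x) = incl U K J x.
Proof. by move=> KI IJ x; rewrite /incl -FImap_comp //; apply: inclI. Qed.
End Maps.

Lemma incl_sum (U : FImod) I J (H : I `<=` J) (T : Type) (r : seq T) (P : pred T) (F : T -> U I) :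
  incl U I J (\sum_(i <- r | P i) F i) = \sum_(i <- r | P i) incl U I J (F i).
Proof. by rewrite /incl FImap_sum //; apply: inclI. Qed.

Lemma inclN (U : FImod) I J (H : I `<=` J) x : incl U I J (- x) = - incl U I J x.
Proof. by rewrite /incl FImapN //; apply: inclI. Qed.

Lemma sub1K (J K : {fset nat}) a : K `<=` J -> a \in J -> a |` K `<=` J.
Proof. by move=> KJ aJ; apply/fsubsetP => x; rewrite in_fset1U => /orP [/eqP->|/(fsubsetP KJ)]. Qed.

Lemma sigma_eta0 (U : FImod) J z : sigma U J (eta U J z) = 0.
Proof.
rewrite /sigma /eta.
have step : forall I, codim1 J I -> incl U I J (\sum_(K <- fpowerset J | codim2 J K && (K `<=` I)) (if eta_sign J K I then incl U K I (z K) else - incl U K I (z K))) = \sum_(K <- fpowerset J | codim2 J K && (K `<=` I)) (if eta_sign J K I then incl U K J (z K) else - incl U K J (z K)).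
  move=> I /andP [IJ _]; rewrite incl_sum //; apply eq_bigr => K /andP [_ KI].
  by case: ifP => _; rewrite ?inclN ?incl_comp.
rewrite (eq_bigr _ step).
rewrite (exchange_big_dep (codim2 J)); last by move=> I K _ /andP [].
rewrite big1 // => K cK2.
move: (cK2) => /andP [KJ /eqP cK].
have [a [b [ab aD bD Hc]]] := two_elems _ _ KJ cK.
move: (aD) (bD); rewrite !in_fsetD => /andP [aK aJ] /andP [bK bJ].
have anb : a != b by rewrite neq_ltn ab.
have Pc : forall c, c \in J -> c \notin K -> codim1 J (c |` K) && (codim2 J K && (K `<=` c |` K)).
  move=> c cJ cK'; rewrite cK2 fsubsetU1 andbT /codim1 sub1K //= cardfsU1 cK' -cK add1n eqxx andbT //.
refine (eq_trans (sum2 _ _ _ _ _ (a |` K) (b |` K) _ _ _ _ _ _ _) _); rewrite ?fset_uniq ?Pc ?fpowersetE ?sub1K //.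
- apply/negP => /eqP E; have : a \in b |` K by rewrite -E fset1U1.
  by rewrite in_fset1U (negbTE anb) (negbTE aK).
- move=> y _ /andP [c1 /andP [_ KI]].
  have [c [cD ->]] := codim1_sup _ _ _ KJ cK c1 KI.
  by case: (Hc c cD) => ->; [left|right].
- have -> : eta_sign J K (a |` K).
    apply/hasP; exists a; first by rewrite in_fsetD fset1U1 aK.
    apply/hasP; exists b => //; by rewrite in_fsetD in_fset1U negb_or eq_sym anb bK bJ.
  have -> : eta_sign J K (b |` K) = false.
    apply/negbTE/hasPn => x; rewrite in_fsetD in_fset1U => /andP [xK /orP [/eqP ->|]];
      last by rewrite (negbTE xK).
    apply/hasPn => y; rewrite in_fsetD in_fset1U => /andP [/norP [yb yK] yJ].
    have : y \in J `\` K by rewrite in_fsetD yK yJ.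
    case/Hc => ey; last by move: yb; rewrite ey eqxx.
    by rewrite ey -leqNgt ltnW.
  by rewrite subrr.
Qed.

Lemma bij_of (A B : choiceType) (f : A -> B) :
  injective f -> (forall b, exists a, f a = b) -> bijective f.
Proof.
move=> finj fsurj.
have H : forall b, exists a, f a == b by move=> b; have [a <-] := fsurj b; exists a.
exists (fun b => xchoose (H b)).
  by move=> a; apply: finj; apply/eqP; exact: xchooseP (H (f a)).
by move=> b; apply/eqP; exact: xchooseP (H b).
Qed.

Theorem lemma2p23 (V W : FImod) (Psi : forall I : {fset nat}, V I -> W I) (E : nat) :
  is_FImorph V W Psi ->
  centrally_stable W E ->
  bounded_gen V E ->
  (forall J : {fset nat}, (#|` J| <= E)%N -> bijective (Psi J)) ->
  forall J : {fset nat}, bijective (Psi J).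
Proof.
move=> [Padd Pnat] Hcs Hbg Hsmall.
have Psi0 : forall I, Psi I 0 = 0.
  by move=> I; apply/eqP; rewrite -(subrr (Psi I 0)) -{2}(addr0 0) Padd addrK.
have PsiN : forall I x, Psi I (- x) = - Psi I x.
  by move=> I x; apply/eqP; rewrite -subr_eq0 opprK -Padd addNr Psi0.
have Psi_sum : forall I (T : Type) (r : seq T) (P : pred T) (F : T -> V I),
    Psi I (\sum_(i <- r | P i) F i) = \sum_(i <- r | P i) Psi I (F i).
  by move=> I T r P F; apply: (big_morph (Psi I)); [exact: Padd|exact: Psi0].
have Pincl : forall K I, K `<=` I -> forall x, Psi I (incl V K I x) = incl W K I (Psi K x).
  by move=> K I KI x; rewrite /incl Pnat //; apply: inclI.
suff main : forall n J, (#|` J| <= n)%N -> bijective (Psi J).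
  by move=> J; exact: main _ J (leqnn _).
elim=> [|n IH] J cJ.
  by apply: Hsmall; rewrite (leq_trans cJ).
case: (leqP #|` J| E) => [|EJ]; first exact: Hsmall.
case: (leqP #|` J| n) => [/IH //|cJn].
have IH' : forall L, (#|` L| < #|` J|)%N -> bijective (Psi L).
  by move=> L HL; apply: IH; lia.
have [Wsurj Wker] := Hcs J EJ.
have c1lt : forall I, codim1 J I -> (#|` I| < #|` J|)%N.
  by move=> I /andP [_ /eqP <-].
have c1sub : forall I, codim1 J I -> I `<=` J by move=> I /andP [].
apply: bij_of.
- suff core : forall v, Psi J v = 0 -> v = 0.
    move=> v1 v2 E12; apply/eqP; rewrite -subr_eq0; apply/eqP; apply: core.
    by rewrite Padd PsiN E12 subrr.
  move=> v Hv0.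
  have [xg Ev] := Hbg J v.
  have [x' Ex'] : exists x', v = sigma V J x'.
    rewrite Ev big_seq_cond.
    apply: (big_ind (fun s => exists x', s = sigma V J x')).
    + exists (fun _ => 0); rewrite /sigma big1 // => I /c1sub IJ.
      by rewrite /incl FImap0 //; apply: inclI.
    + move=> s1 s2 [x1 ->] [x2 ->]; exists (fun I => x1 I + x2 I).
      rewrite /sigma -big_split; apply: eq_bigr => I /c1sub IJ.
      by rewrite /incl FImap_add //; apply: inclI.
    + move=> I /andP [IinJ cI]; rewrite fpowersetE in IinJ.
      have : ~~ (J `<=` I).
        by apply/negP => /fsubset_leq_card; lia.
      case/fsubsetPn => c cJ' cI'.
      pose I' := J `\ c.
      have II' : I `<=` I' by rewrite fsubsetD1 IinJ cI'.
      have cI1 : codim1 J I'.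
        by rewrite /codim1 fsubD1set /= [#|` J|](cardfsD1 c) cJ'.
      exists (fun L => if L == I' then incl V I L (xg I) else 0).
      rewrite /sigma -big_filter (bigD1_seq I') ?mem_filter ?cI1 ?fpowersetE ?fsubD1set
        ?filter_uniq ?fset_uniq //= eqxx incl_comp // ?fsubD1set //.
      rewrite big1_seq ?addr0 // => L /andP [LI']; rewrite mem_filter => /andP [/c1sub LJ _].
      by rewrite (negbTE LI') /incl FImap0 //; apply: inclI.
  have Hs : sigma W J (fun I => Psi I (x' I)) = 0.
    rewrite -Hv0 Ex' /sigma Psi_sum; apply: eq_bigr => I /c1sub IJ.
    by rewrite Pincl.
  have [y Hy] := Wker _ Hs.
  have Hz : forall K, exists z : V K, codim2 J K ==> (Psi K z == y K).
    move=> K; case: (boolP (codim2 J K)) => [c2|_]; last by exists 0.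
    have [g _ gK] : bijective (Psi K).
      by apply: IH'; move: c2 => /andP [_ /eqP <-]; lia.
    by exists (g (y K)); rewrite gK eqxx.
  pose z K := xchoose (Hz K).
  have Hx : forall I, codim1 J I -> x' I = eta V J z I.
    move=> I c1; apply: (bij_inj (IH' I (c1lt I c1))).
    rewrite Hy // /eta Psi_sum; apply: eq_bigr => K /andP [c2 KI].
    have /implyP/(_ c2)/eqP Ez := xchooseP (Hz K).
    by case: ifP => _; rewrite ?PsiN Pincl // Ez.
  rewrite Ex' -(sigma_eta0 V J z) /sigma; apply: eq_bigr => I c1.
  by rewrite Hx.
- move=> w; have [x ->] := Wsurj w.
  have Hu : forall I, exists u : V I, codim1 J I ==> (Psi I u == x I).
    move=> I; case: (boolP (codim1 J I)) => [c1|_]; last by exists 0.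
    have [g _ gK] := IH' I (c1lt I c1).
    by exists (g (x I)); rewrite gK eqxx.
  pose u I := xchoose (Hu I).
  exists (sigma V J u).
  rewrite /sigma Psi_sum; apply: eq_bigr => I c1.
  rewrite Pincl ?c1sub //.
  by have /implyP/(_ c1)/eqP -> := xchooseP (Hu I).
Qed.
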